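(* Let $p\in V$ and $S\subset V$. Define $$S_p=\begin{cases}\mathcal N_p\cap(V\setminus S)&\text{if }p\in S,\\ \mathcal N_p\cap S&\text{if }p\notin S,\end{cases}\qquad \overline{S_p}=S_p\cup\{p\}.$$ Define the Dirichlet Laplacian $\Delta'$ on $\overline{S_p}$ by $$(\Delta'u)_i=d_i^{-r}\Big(d_iu_i-\sum_{j\in\overline{S_p}}\omega_{ij}u_j\Big)\ \text{ for }i\in\overline{S_p},\qquad(\Delta'u)_i=0\ \text{ for }i\notin\overline{S_p}.$$ Here $d_i$ is the degree in the full graph. Let $M_p=\max_{i\in V}|((\Delta')^2\chi_{S_p})_i|$ and $k_p=|(\kappa^{1,r}_S)_p|$. Assume $M_p>0$ and $k_p^2>M_p$, and set $$\tau_{1,2}=\frac{k_p\mp\sqrt{k_p^2-M_p}}{M_p}\quad(0<\tau_1<\tau_2).$$ Then for every $\tau\in(\tau_1,\tau_2)$, the set $S'=\{i\in V:(e^{-\tau\Delta}\chi_S)_i\ge\frac12\}$ satisfies $p\in S'$ if and only if $p\notin S$. That is, the phase at node $p$ changes after one MBO iteration.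
   Context: $G=(V,E)$ is a finite undirected weighted graph with vertex set $V=\{1,\dots,n\}$. The weights satisfy $\omega_{ij}=\omega_{ji}\ge0$, with $\omega_{ij}>0$ iff $\{i,j\}\in E$, and $\omega_{ii}=0$. The degrees are $d_i=\sum_j\omega_{ij}>0$. A parameter $r\in[0,1]$ is fixed. The neighbor set of $i$ is $\mathcal N_i=\{j:\omega_{ij}>0\}$. $\chi_S$ is the indicator of $S$. The graph Laplacian is $(\Delta u)_i=d_i^{-r}\sum_j\omega_{ij}(u_i-u_j)$, and $e^{-\tau\Delta}$ is the solution operator of $\dot u=-\Delta u$. The graph curvature (with $q=1$) is given by $(\kappa^{1,r}_S)_i=d_i^{-r}\sum_{j\notin S}\omega_{ij}$ for $i\in S$, and $(\kappa^{1,r}_S)_i=-d_i^{-r}\sum_{j\in S}\omega_{ij}$ for $i\notin S$; equivalently $\kappa^{1,r}_S=\Delta\chi_S$. *)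

(* Defs.v *)
From Stdlib Require Import Reals Lra.
Open Scope R_scope.

(* Vertex set V = {0, ..., n-1}; weights w : nat -> nat -> R; sets S as bool predicates. *)

Fixpoint sumV (n : nat) (f : nat -> R) : R :=
  match n with
  | O => 0
  | S m => sumV m f + f m
  end.

(* maxV n f = max(0, max_{i<n} f i); used only on nonnegative f with n >= 1 *)
Fixpoint maxV (n : nat) (f : nat -> R) : R :=
  match n with
  | O => 0
  | S m => Rmax (maxV m f) (f m)
  end.

Definition deg (n : nat) (w : nat -> nat -> R) (i : nat) : R :=
  sumV n (fun j => w i j).

Definition dpow (n : nat) (w : nat -> nat -> R) (r : R) (i : nat) : R :=
  Rpower (deg n w i) (- r).

Definition chi (S : nat -> bool) (i : nat) : R := if S i then 1 else 0.

Definition Lap (n : nat) (w : nat -> nat -> R) (r : R) (u : nat -> R) (i : nat) : R :=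
  dpow n w r i * sumV n (fun j => w i j * (u i - u j)).

Definition kappa (n : nat) (w : nat -> nat -> R) (r : R) (S : nat -> bool) (i : nat) : R :=
  if S i then dpow n w r i * sumV n (fun j => if S j then 0 else w i j)
  else - (dpow n w r i * sumV n (fun j => if S j then w i j else 0)).

Definition isNb (w : nat -> nat -> R) (p j : nat) : bool :=
  if Rlt_dec 0 (w p j) then true else false.

Definition Sp (w : nat -> nat -> R) (S : nat -> bool) (p : nat) (j : nat) : bool :=
  if S p then isNb w p j && negb (S j) else isNb w p j && S j.

Definition Spbar (w : nat -> nat -> R) (S : nat -> bool) (p : nat) (j : nat) : bool :=
  Sp w S p j || Nat.eqb j p.

Definition DLap (n : nat) (w : nat -> nat -> R) (r : R) (S : nat -> bool) (p : nat)
  (u : nat -> R) (i : nat) : R :=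
  if Spbar w S p i then
    dpow n w r i * (deg n w i * u i - sumV n (fun j => if Spbar w S p j then w i j * u j else 0))
  else 0.

Definition Mp (n : nat) (w : nat -> nat -> R) (r : R) (S : nat -> bool) (p : nat) : R :=
  maxV n (fun i => Rabs (DLap n w r S p (DLap n w r S p (chi (Sp w S p))) i)).

Definition kp (n : nat) (w : nat -> nat -> R) (r : R) (S : nat -> bool) (p : nat) : R :=
  Rabs (kappa n w r S p).

Definition tau1 (k M : R) : R := (k - sqrt (k ^ 2 - M)) / M.
Definition tau2 (k M : R) : R := (k + sqrt (k ^ 2 - M)) / M.

(* Main.v *)
Require Import Defs.
From Stdlib Require Import Reals Lra Lia Psatz.
Open Scope R_scope.

Lemma sumV_ext n f g : (forall j, (j < n)%nat -> f j = g j) -> sumV n f = sumV n g.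
Proof. induction n; simpl; intros H; auto. rewrite IHn by (intros; apply H; lia). rewrite H by lia. auto. Qed.

Lemma sumV_plus n f g : sumV n (fun j => f j + g j) = sumV n f + sumV n g.
Proof. induction n; simpl; [lra|rewrite IHn; lra]. Qed.

Lemma sumV_scal n a f : sumV n (fun j => a * f j) = a * sumV n f.
Proof. induction n; simpl; [lra|rewrite IHn; lra]. Qed.

Lemma sumV_le n f g : (forall j, (j < n)%nat -> f j <= g j) -> sumV n f <= sumV n g.
Proof. induction n; simpl; intros H; [lra|]. assert (f n <= g n) by (apply H; lia).
 assert (sumV n f <= sumV n g) by (apply IHn; intros; apply H; lia). lra. Qed.

Lemma sumV_const n a : sumV n (fun _ => a) = INR n * a.
Proof. induction n; simpl sumV; [simpl; lra|]. rewrite IHn, S_INR. lra. Qed.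

Lemma sumV_nonneg n f : (forall j, (j < n)%nat -> 0 <= f j) -> 0 <= sumV n f.
Proof. intros H. replace 0 with (sumV n (fun _ => 0)). apply sumV_le; auto.
 rewrite sumV_const; lra. Qed.

Lemma sumV_term n f i : (forall j, (j < n)%nat -> 0 <= f j) -> (i < n)%nat -> f i <= sumV n f.
Proof. induction n; simpl; intros H Hi; [lia|].
 assert (0 <= sumV n f) by (apply sumV_nonneg; intros; apply H; lia).
 destruct (Nat.eq_dec i n). subst; lra.
 assert (f i <= sumV n f) by (apply IHn; [intros; apply H; lia| lia]).
 assert (0 <= f n) by (apply H; lia). lra. Qed.

Lemma maxV_ge n f i : (i < n)%nat -> f i <= maxV n f.
Proof. induction n; simpl; intros Hi; [lia|].
 destruct (Nat.eq_dec i n). subst; apply Rmax_r.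
 eapply Rle_trans; [apply IHn; lia| apply Rmax_l]. Qed.

Lemma dpl_ext f g t l l' : (forall x, f x = g x) -> l = l' ->
  derivable_pt_lim f t l -> derivable_pt_lim g t l'.
Proof. intros H <- D eps Heps. destruct (D eps Heps) as [d Hd]. exists d.
 intros h H1 H2. rewrite <- !H. auto. Qed.

Lemma deriv_sumV n (F F' : nat -> R -> R) t :
  (forall i, (i < n)%nat -> derivable_pt_lim (F i) t (F' i t)) ->
  derivable_pt_lim (fun s => sumV n (fun i => F i s)) t (sumV n (fun i => F' i t)).
Proof. induction n; simpl; intros H.
 - eapply dpl_ext; [| | apply (derivable_pt_lim_const 0)]; reflexivity.
 - eapply dpl_ext; [| | apply derivable_pt_lim_plus; [apply IHn; intros; apply H; lia| apply (H n); lia]];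
   reflexivity. Qed.

Definition fneg (x : R) := Rmin x 0 ^ 2.

Lemma fneg_rem x y : Rabs (fneg y - fneg x - 2 * Rmin x 0 * (y - x)) <= (y - x) ^ 2.
Proof. unfold fneg, Rmin. destruct (Rle_dec x 0), (Rle_dec y 0); apply Rabs_le; split; pose proof (pow2_ge_0 (y-x)); nra. Qed.

Lemma fneg_deriv x : derivable_pt_lim fneg x (2 * Rmin x 0).
Proof. intros eps Heps. exists (mkposreal eps Heps). intros h Hh Hlt. simpl in Hlt.
 pose proof (fneg_rem x (x + h)) as R0. replace (x + h - x) with h in R0 by ring.
 replace ((fneg (x + h) - fneg x) / h - 2 * Rmin x 0) with
   ((fneg (x + h) - fneg x - 2 * Rmin x 0 * h) / h) by (field; auto).
 unfold Rdiv. rewrite Rabs_mult, Rabs_inv.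
 assert (0 < Rabs h) by (apply Rabs_pos_lt; auto).
 apply (Rmult_lt_reg_r (Rabs h)); auto. rewrite Rmult_assoc, Rinv_l by lra.
 rewrite <- pow2_abs in R0. nra. Qed.

Lemma key_ineq a b : 2 * Rmin a 0 * (b - a) <= Rmin a 0 ^ 2 + Rmin b 0 ^ 2.
Proof. unfold Rmin. destruct (Rle_dec a 0), (Rle_dec b 0); nra. Qed.

Lemma fneg0 x : 0 <= x -> fneg x = 0.
Proof. unfold fneg, Rmin. destruct (Rle_dec x 0); intros; [replace x with 0 by lra|]; ring.
 Qed.

Lemma compare n (w : nat->nat->R) (c : nat -> R) (A : nat -> bool) (z z' : R -> nat -> R) :
 (forall i j, (i<n)%nat -> (j<n)%nat -> 0 <= w i j) ->
 (forall i, (i<n)%nat -> 0 <= c i) ->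
 (forall t i, (i<n)%nat -> derivable_pt_lim (fun s => z s i) t (z' t i)) ->
 (forall i, (i<n)%nat -> 0 <= z 0 i) ->
 (forall t i, 0 <= t -> (i<n)%nat -> A i = true ->
     c i * sumV n (fun j => w i j * (z t j - z t i)) <= z' t i) ->
 (forall t i, 0 <= t -> (i<n)%nat -> A i = false -> 0 <= z t i) ->
 forall t i, 0 <= t -> (i<n)%nat -> 0 <= z t i.
Proof.
 intros Hw Hc Hd H0 HA HnA.
 set (psi := fun s => sumV n (fun i => fneg (z s i))).
 set (dpsi := fun s => sumV n (fun i => 2 * Rmin (z s i) 0 * z' s i)).
 assert (Hpsi : forall s, derivable_pt_lim psi s (dpsi s)).
 { intros s. unfold psi, dpsi.
   apply (deriv_sumV n (fun i s => fneg (z s i)) (fun i s => 2 * Rmin (z s i) 0 * z' s i)).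
   intros i Hi. eapply dpl_ext; [| | apply (derivable_pt_lim_comp (fun s => z s i) fneg);
     [apply Hd; auto| apply fneg_deriv]]; reflexivity. }
 set (K0 := sumV n (fun i => sumV n (fun j => c i * w i j))).
 assert (Hcw : forall i j, (i<n)%nat -> (j<n)%nat -> c i * w i j <= K0).
 { intros i j Hi Hj. unfold K0.
   apply Rle_trans with (sumV n (fun j => c i * w i j)).
   - apply (sumV_term n (fun j => c i * w i j)); auto. intros; apply Rmult_le_pos; auto.
   - apply (sumV_term n (fun i => sumV n (fun j => c i * w i j))); auto.
     intros; apply sumV_nonneg; intros; apply Rmult_le_pos; auto. }
 assert (HK0 : 0 <= K0).
 { unfold K0; apply sumV_nonneg; intros; apply sumV_nonneg; intros; apply Rmult_le_pos; auto. }
 set (K := 2 * INR n * K0).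
 assert (Hb : forall s, 0 <= s -> dpsi s <= K * psi s).
 { intros s Hs. unfold dpsi.
   apply Rle_trans with (sumV n (fun i => sumV n (fun j => c i * w i j * (Rmin (z s i) 0 ^ 2 + Rmin (z s j) 0 ^ 2)))).
   { apply sumV_le. intros i Hi.
     case_eq (A i); intros HAi.
     - pose proof (HA s i Hs Hi HAi) as Hz.
       assert (Rmin (z s i) 0 <= 0) by apply Rmin_r.
       apply Rle_trans with (2 * Rmin (z s i) 0 * (c i * sumV n (fun j => w i j * (z s j - z s i)))).
       + nra.
       + rewrite <- sumV_scal, <- sumV_scal. apply sumV_le. intros j Hj.
         pose proof (key_ineq (z s i) (z s j)).
         assert (0 <= c i * w i j) by (apply Rmult_le_pos; auto). nra.
     - rewrite (Rmin_right (z s i) 0) by (apply HnA; auto).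
       replace (2 * 0 * z' s i) with 0 by ring.
       apply sumV_nonneg; intros j Hj. apply Rmult_le_pos. apply Rmult_le_pos; auto.
       pose proof (pow2_ge_0 (Rmin (z s i) 0)); pose proof (pow2_ge_0 (Rmin (z s j) 0)); lra. }
   apply Rle_trans with (sumV n (fun i => sumV n (fun j => K0 * (Rmin (z s i) 0 ^ 2 + Rmin (z s j) 0 ^ 2)))).
   { apply sumV_le; intros i Hi; apply sumV_le; intros j Hj. apply Rmult_le_compat_r; auto.
     pose proof (pow2_ge_0 (Rmin (z s i) 0)); pose proof (pow2_ge_0 (Rmin (z s j) 0)); lra. }
   right. rewrite (sumV_ext n _ (fun i => K0 * (INR n * Rmin (z s i) 0 ^ 2 + psi s))).
   2:{ intros i Hi. rewrite sumV_scal, sumV_plus, sumV_const. reflexivity. }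
   rewrite sumV_scal, sumV_plus, sumV_const, sumV_scal. unfold K, psi, fneg. ring. }
 set (g := fun s => psi s * exp (- (K * s))).
 set (g' := fun s => dpsi s * exp (- (K * s)) + psi s * (exp (- (K * s)) * - K)).
 assert (Hg : forall s, derivable_pt_lim g s (g' s)).
 { intros s. unfold g, g'.
   assert (He : derivable_pt_lim (fun s => exp (- (K * s))) s (exp (- (K * s)) * - K)).
   { eapply dpl_ext; [| | apply (derivable_pt_lim_comp (fun s => - (K * s)) exp)].
     intros; reflexivity. reflexivity.
     eapply dpl_ext; [| | apply derivable_pt_lim_opp, derivable_pt_lim_scal, derivable_pt_lim_id].
     intros; reflexivity. ring. apply derivable_pt_lim_exp. }
   eapply dpl_ext; [| | apply (derivable_pt_lim_mult psi (fun s => exp (- (K * s)))); [apply Hpsi| apply He]].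
   intros; reflexivity. reflexivity. }
 assert (Hpsi0 : psi 0 = 0).
 { unfold psi. rewrite (sumV_ext n _ (fun _ => 0)). rewrite sumV_const; ring.
   intros; apply fneg0; auto. }
 assert (Hpsit : forall t, 0 <= t -> psi t <= 0).
 { intros t Ht. destruct (Req_dec t 0) as [->|Hne]. lra.
   destruct (MVT_cor2 g g' 0 t) as [cc [Heq Hcc]]. lra. intros; apply Hg.
   assert (g 0 = 0) by (unfold g; rewrite Hpsi0; ring).
   assert (g' cc <= 0).
   { unfold g'. pose proof (Hb cc ltac:(lra)). pose proof (exp_pos (- (K * cc))). nra. }
   assert (g t <= 0) by nra. unfold g in *. pose proof (exp_pos (- (K * t))). nra. }
 intros t i Ht Hi. pose proof (Hpsit t Ht).
 assert (fneg (z t i) <= psi t).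
 { unfold psi. apply (sumV_term n (fun i => fneg (z t i))); auto. intros; apply pow2_ge_0. }
 unfold fneg, Rmin in *. destruct (Rle_dec (z t i) 0); nra.
Qed.

Lemma dpow_pos n w r i : 0 < dpow n w r i.
Proof. unfold dpow, Rpower. apply exp_pos. Qed.

Lemma DLap_lin3 n w r S p (x y z : nat -> R) a b cc i :
  DLap n w r S p (fun j => a * x j + b * y j + cc * z j) i =
  a * DLap n w r S p x i + b * DLap n w r S p y i + cc * DLap n w r S p z i.
Proof. unfold DLap. destruct (Spbar w S p i); [|ring].
 rewrite (sumV_ext n _ (fun j => a * (if Spbar w S p j then w i j * x j else 0) +
    b * (if Spbar w S p j then w i j * y j else 0) + cc * (if Spbar w S p j then w i j * z j else 0))).
 2:{ intros j _. destruct (Spbar w S p j); ring. }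
 rewrite !sumV_plus, !sumV_scal. ring. Qed.

Lemma poly_deriv a b c t :
  derivable_pt_lim (fun t => a - t * b - t ^ 2 / 2 * c) t (- b - t * c).
Proof.
 eapply dpl_ext; [| | apply (derivable_pt_lim_minus _ _ t _ _
   (derivable_pt_lim_minus _ _ t _ _ (derivable_pt_lim_const a t)
      (derivable_pt_lim_scal id b t 1 (derivable_pt_lim_id t)))
   (derivable_pt_lim_scal (fun x => x ^ 2) (c / 2) t _ (derivable_pt_lim_pow t 2)))].
 intros x. cbv [minus_fct mult_real_fct fct_cte id]. field.
 simpl. field. Qed.

Lemma lower_bound n w r S p (W : R -> nat -> R) :
 (forall i j, (i<n)%nat -> (j<n)%nat -> 0 <= w i j) ->
 (p < n)%nat ->
 (forall t i, (i<n)%nat -> derivable_pt_lim (fun s => W s i) t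
     (dpow n w r i * sumV n (fun j => w i j * (W t j - W t i)))) ->
 (forall i, (i<n)%nat -> 0 <= W 0 i) ->
 (forall i, (i<n)%nat -> chi (Sp w S p) i <= W 0 i) ->
 forall t, 0 <= t -> chi (Sp w S p) p - t * DLap n w r S p (chi (Sp w S p)) p
    - t ^ 2 / 2 * Mp n w r S p <= W t p.
Proof.
 intros Hw Hp Hd H0 HX.
 set (c := dpow n w r).
 assert (Hc : forall i, (i<n)%nat -> 0 <= c i) by (intros; left; apply dpow_pos).
 assert (HW : forall t i, 0 <= t -> (i<n)%nat -> 0 <= W t i).
 { apply (compare n w c (fun _ => true) W (fun t i => c i * sumV n (fun j => w i j * (W t j - W t i)))); auto.
   intros; lra. intros; discriminate. }
 set (X := chi (Sp w S p)).
 set (G := DLap n w r S p X).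
 set (H := DLap n w r S p G).
 set (B := chi (Spbar w S p)).
 set (M := Mp n w r S p).
 set (phi := fun t => fun j => 1 * X j + (- t) * G j + (- (t ^ 2 / 2 * M)) * B j).
 assert (Hphi0 : forall t i, Spbar w S p i = false -> phi t i = 0).
 { intros t i Hi. unfold phi, X, G, B, chi, DLap. rewrite Hi.
   unfold Spbar in Hi. apply Bool.orb_false_iff in Hi. destruct Hi as [Hi _]. rewrite Hi. ring. }
 assert (HL : forall t i, Spbar w S p i = true ->
    c i * sumV n (fun j => w i j * (phi t i - phi t j)) = DLap n w r S p (phi t) i).
 { intros t i Hi. unfold DLap at 1. rewrite Hi. unfold deg. fold c. f_equal.
   rewrite (sumV_ext n _ (fun j => phi t i * w i j + (-1) * (if Spbar w S p j then w i j * phi t j else 0))).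
   rewrite sumV_plus, sumV_scal, sumV_scal. replace (sumV n (w i)) with (sumV n (fun j => w i j)) by reflexivity. ring.
   intros j _. destruct (Spbar w S p j) eqn:Hj; [ring|]. rewrite (Hphi0 t j Hj). ring. }
 assert (HDB : forall i, (i<n)%nat -> 0 <= DLap n w r S p B i).
 { intros i Hi. unfold DLap. destruct (Spbar w S p i) eqn:E; [|lra].
   apply Rmult_le_pos. left; apply dpow_pos.
   unfold deg. assert (sumV n (fun j => if Spbar w S p j then w i j * B j else 0) <= sumV n (fun j => w i j)).
   { apply sumV_le. intros j Hj. unfold B, chi. pose proof (Hw i j Hi Hj).
     destruct (Spbar w S p j); lra. }
   unfold B at 1, chi at 1. rewrite E. lra. }
 assert (HH : forall i, (i<n)%nat -> Rabs (H i) <= M).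
 { intros i Hi. unfold M, Mp. apply (maxV_ge n (fun i => Rabs (H i))); auto. }
 assert (HM : 0 <= M) by (eapply Rle_trans; [apply Rabs_pos| apply (HH p Hp)]).
 assert (Hcmp := compare n w c (Spbar w S p) (fun t i => W t i - phi t i)
   (fun t i => c i * sumV n (fun j => w i j * (W t j - W t i)) - (- G i - t * (M * B i))) Hw Hc).
 assert (Hfin : forall t, 0 <= t -> 0 <= W t p - phi t p).
 { intros t Ht. apply Hcmp; auto.
   - intros s i Hi. apply derivable_pt_lim_minus. apply Hd; auto.
     eapply dpl_ext; [| | apply (poly_deriv (X i) (G i) (M * B i) s)].
     intros; unfold phi; cbv beta; field. reflexivity.
   - intros i Hi. pose proof (HX i Hi) as HXi; fold X in HXi. assert (phi 0 i = X i) by (unfold phi; cbv beta; field). cbv beta. lra.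
   - intros s i Hs Hi HA.
     rewrite (sumV_ext n _ (fun j => w i j * (W s j - W s i) + w i j * (phi s i - phi s j)))
       by (intros; ring).
     rewrite sumV_plus, Rmult_plus_distr_l, HL by auto.
     unfold phi. rewrite DLap_lin3. fold G H.
     assert (HBi : B i = 1) by (unfold B, chi; rewrite HA; auto).
     pose proof (HH i Hi) as HHi. pose proof (HDB i Hi) as HDBi.
     assert (HHi' : - M <= H i) by (pose proof (Rle_abs (- H i)); rewrite Rabs_Ropp in *; lra).
     assert (HDX : DLap n w r S p X i = G i) by reflexivity.
     rewrite HBi. 
     assert (0 <= s * (H i + M)) by (apply Rmult_le_pos; lra). assert (0 <= s ^ 2 / 2 * M * DLap n w r S p B i) by (apply Rmult_le_pos; [apply Rmult_le_pos; [apply Rmult_le_pos; [apply pow2_ge_0|lra]|lra]|lra]). lra.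
   - intros s i Hs Hi HA. rewrite Hphi0 by auto. pose proof (HW s i Hs Hi). lra. }
 intros t Ht. pose proof (Hfin t Ht) as Hf. unfold phi in Hf.
 assert (HBp : B p = 1) by (unfold B, chi, Spbar; rewrite Nat.eqb_refl, Bool.orb_true_r; auto).
 fold X G M. rewrite HBp in Hf. lra.
Qed.

Theorem mainTheorem15
  (n : nat) (w : nat -> nat -> R) (r : R)
  (Hr : 0 <= r <= 1)
  (Hsym : forall i j, (i < n)%nat -> (j < n)%nat -> w i j = w j i)
  (Hnn : forall i j, (i < n)%nat -> (j < n)%nat -> 0 <= w i j)
  (Hdiag : forall i, (i < n)%nat -> w i i = 0)
  (Hdeg : forall i, (i < n)%nat -> 0 < deg n w i)
  (S : nat -> bool) (p : nat) (Hp : (p < n)%nat)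
  (HM : 0 < Mp n w r S p)
  (Hk : kp n w r S p ^ 2 > Mp n w r S p)
  (tau : R)
  (Htau : tau1 (kp n w r S p) (Mp n w r S p) < tau < tau2 (kp n w r S p) (Mp n w r S p))
  (u : R -> nat -> R)
  (Hu0 : forall i, (i < n)%nat -> u 0 i = chi S i)
  (Hode : forall (t : R) (i : nat), (i < n)%nat ->
            derivable_pt_lim (fun s => u s i) t (- Lap n w r (u t) i)) :
  (u tau p >= 1 / 2 <-> S p = false).
Proof.
 rename S into SS.
 set (k := kp n w r SS p) in *. set (M := Mp n w r SS p) in *.
 set (X := chi (Sp w SS p)).
 set (Sg := sumV n (fun j => if Sp w SS p j then w p j else 0)).
 assert (HSg : 0 <= Sg).
 { apply sumV_nonneg; intros j Hj. destruct (Sp w SS p j); [apply Hnn|]; auto; lra. }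
 assert (HXp : X p = 0).
 { unfold X, chi, Sp, isNb. rewrite (Hdiag p Hp).
   destruct (Rlt_dec 0 0); [lra|]. destruct (SS p); reflexivity. }
 assert (HG : DLap n w r SS p X p = - (dpow n w r p * Sg)).
 { unfold DLap. assert (Spbar w SS p p = true) by (unfold Spbar; rewrite Nat.eqb_refl, Bool.orb_true_r; auto).
   rewrite H, HXp. unfold Sg. rewrite (sumV_ext n _ (fun j => if Sp w SS p j then w p j else 0)).
   ring. intros j Hj. unfold X, chi, Spbar. destruct (Sp w SS p j); simpl. ring.
   destruct (j =? p)%nat; ring. }
 assert (Hk' : k = dpow n w r p * Sg).
 { unfold k, kp, kappa. pose proof (dpow_pos n w r p).
   assert (Hpos : 0 <= dpow n w r p * Sg) by (apply Rmult_le_pos; lra).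
   destruct (SS p) eqn:HSp.
   - rewrite (sumV_ext n _ (fun j => if Sp w SS p j then w p j else 0)).
     apply Rabs_pos_eq; auto.
     intros j Hj. unfold Sp, isNb. rewrite HSp. pose proof (Hnn p j Hp Hj).
     destruct (SS j), (Rlt_dec 0 (w p j)); simpl; lra.
   - rewrite (sumV_ext n _ (fun j => if Sp w SS p j then w p j else 0)).
     rewrite Rabs_Ropp. apply Rabs_pos_eq; auto.
     intros j Hj. unfold Sp, isNb. rewrite HSp. pose proof (Hnn p j Hp Hj).
     destruct (SS j), (Rlt_dec 0 (w p j)); simpl; lra. }
 assert (Hq : tau * k - tau ^ 2 / 2 * M > 1 / 2 /\ 0 <= tau).
 { unfold tau1, tau2 in Htau. fold k M in Htau.
   assert (Hk0 : 0 <= k) by (unfold k, kp; apply Rabs_pos).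
   set (s := sqrt (k ^ 2 - M)) in *.
   assert (Hs2 : s * s = k ^ 2 - M) by (apply sqrt_sqrt; lra).
   assert (Hs0 : 0 <= s) by apply sqrt_pos.
   destruct Htau as [H1 H2].
   apply (Rmult_lt_compat_r M) in H1; auto. apply (Rmult_lt_compat_r M) in H2; auto.
   unfold Rdiv in H1, H2. rewrite Rmult_assoc, Rinv_l in H1, H2 by lra.
   rewrite Rmult_1_r in H1, H2.
   assert (s < k) by nra.
   split; [|nra].
   assert ((tau * M - k) * (tau * M - k) < s * s) by nra.
   nra. }
 destruct Hq as [Hq Ht].
 assert (Hcases : forall W : R -> nat -> R,
   (forall t i, (i<n)%nat -> derivable_pt_lim (fun s => W s i) t
     (dpow n w r i * sumV n (fun j => w i j * (W t j - W t i)))) ->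
   (forall i, (i<n)%nat -> 0 <= W 0 i) ->
   (forall i, (i<n)%nat -> chi (Sp w SS p) i <= W 0 i) -> W tau p > 1 / 2).
 { intros W HW1 HW2 HW3. pose proof (lower_bound n w r SS p W Hnn Hp HW1 HW2 HW3 tau Ht) as L.
   fold X M in L. rewrite HXp, HG, <- Hk' in L. lra. }
 destruct (SS p) eqn:HSp.
 - assert (1 - u tau p > 1 / 2).
   { apply (Hcases (fun t i => 1 - u t i)).
     + intros t i Hi. eapply dpl_ext; [| | apply (derivable_pt_lim_minus (fct_cte 1) (fun s => u s i)); [apply derivable_pt_lim_const| apply Hode; auto]].
       intros; reflexivity. unfold Lap.
       rewrite (sumV_ext n (fun j => w i j * (1 - u t j - (1 - u t i))) (fun j => w i j * (u t i - u t j))) by (intros; ring).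
       ring.
     + intros i Hi. rewrite Hu0 by auto. unfold chi. destruct (SS i); lra.
     + intros i Hi. rewrite Hu0 by auto. unfold chi, Sp. rewrite HSp.
       destruct (isNb w p i), (SS i); simpl; lra. }
   split; intros; [lra| discriminate].
 - assert (u tau p > 1 / 2).
   { apply (Hcases u).
     + intros t i Hi. eapply dpl_ext; [| | apply Hode; auto].
       intros; reflexivity. unfold Lap.
       rewrite (sumV_ext n (fun j => w i j * (u t j - u t i)) (fun j => -1 * (w i j * (u t i - u t j)))) by (intros; ring).
       rewrite sumV_scal. ring. auto.
     + intros i Hi. rewrite Hu0 by auto. unfold chi. destruct (SS i); lra.
     + intros i Hi. rewrite Hu0 by auto. unfold chi, Sp. rewrite HSp.
       destruct (isNb w p i), (SS i); simpl; lra. }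
   split; intros; [reflexivity| lra].
Qed.
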